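(* With $S$ and $T$ as in the context, $p_S\ge p_T/2$.
   Context: Barycentric subdivisions: $T_0$ is an equilateral triangle with vertices $v_0,v_1,v_2$. $T_n$ is obtained by subdividing every triangular face $\{x,y,z\}$ of $T_{n-1}$ into the six triangles $\{x,m_{xy},c\},\{m_{xy},y,c\},\{y,m_{yz},c\},\{m_{yz},z,c\},\{z,m_{zx},c\},\{m_{zx},x,c\}$, where $m_{uv}$ are side midpoints and $c$ is the barycenter. As a simple graph, $T_n$ has the vertices of this triangulation and the sides of its faces as edges. Non-p.c.f. Sierpinski gasket: $S_0=T_0$. $S_n$ is obtained from $S_{n-1}$ by replacing each triangle $\{x,y,z\}$ of $S_{n-1}$, with its own three edges, by new vertices $m_{xy},m_{yz},m_{zx},c$ private to that triangle and the same six triangles, each carrying its own three edges. Thus distinct triangles have disjoint edge sets. $S$ and $T$ denote the limits. Bond percolation with parameter $p$: each edge receives an i.i.d. uniform $[0,1]$ label and is open if the label is $<p$. For $G\in\{S,T\}$ with approximations $G_n$, $p_G=\sup\{p\in[0,1]:\mathbb{P}_p(\text{there is an open path from } v_0 \text{ to } v_1 \text{ in } G_n)\to0 \text{ as } n\to\infty\}$. *)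

(* Defs.v *)
From HB Require Import structures.
From mathcomp Require Import all_boot all_order all_algebra.
From mathcomp Require Import all_classical all_reals all_analysis.
From Stdlib Require Import Relations.
Set Implicit Arguments. Unset Strict Implicit. Unset Printing Implicit Defensive.
Import Order.TTheory GRing.Theory Num.Theory.
Import numFieldNormedType.Exports.
Local Open Scope classical_set_scope.
Local Open Scope ring_scope.

(* The edges are the entries of [es] (two entries of the list are distinct
   edges even if they join the same vertices).  A configuration assigns to
   every edge "open" (true) or "closed" (false). *)

Section Perco.
Variable V : eqType.

Definition edge_at (es : seq (V * V)) (i : 'I_(size es)) : V * V :=
  tnth (in_tuple es) i.

Definition open_adj (es : seq (V * V)) (w : {ffun 'I_(size es) -> bool})
  (u v : V) : Prop :=
  exists i : 'I_(size es), w i /\ (edge_at i = (u, v) \/ edge_at i = (v, u)).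

Definition open_conn (es : seq (V * V)) (w : {ffun 'I_(size es) -> bool})
  (a b : V) : Prop :=
  clos_refl_trans V (open_adj w) a b.

(* P_p(open path from a to b), edges independently open with probability p
   (equivalently: i.i.d. uniform[0,1] labels, open iff label < p). *)
Definition conn_prob (R : realType) (p : R) (es : seq (V * V)) (a b : V) : R :=
  \sum_(w : {ffun 'I_(size es) -> bool})
     (\prod_(i : 'I_(size es)) (if w i then p else 1 - p)) *
     (if `[< open_conn w a b >] then 1 else 0).

Definition crit_param (R : realType) (E : nat -> seq (V * V)) (a b : V) : R :=
  sup [set p : R | (0 <= p <= 1) /\
        ((fun n => conn_prob p (E n) a b) @ \oo --> (0 : R))].
End Perco.

Definition tri_sides (V : Type) (t : V * V * V) : seq (V * V) :=
  let: (x, y, z) := t in [:: (x, y); (y, z); (z, x)].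

(* Vertices are points of the plane in barycentric coordinates w.r.t. the
   equilateral triangle (v0, v1, v2); geometrically equal points are the same
   vertex of the triangulation. *)
Definition pt := (rat * rat * rat)%type.
Definition ptT0 : pt := (1, 0, 0).
Definition ptT1 : pt := (0, 1, 0).
Definition ptT2 : pt := (0, 0, 1).

Definition midpt (x y : pt) : pt :=
  ((x.1.1 + y.1.1) / 2%:R, (x.1.2 + y.1.2) / 2%:R, (x.2 + y.2) / 2%:R).
Definition bary (x y z : pt) : pt :=
  ((x.1.1 + y.1.1 + z.1.1) / 3%:R, (x.1.2 + y.1.2 + z.1.2) / 3%:R,
   (x.2 + y.2 + z.2) / 3%:R).

Definition bsubdiv (t : pt * pt * pt) : seq (pt * pt * pt) :=
  let: (x, y, z) := t in
  let c := bary x y z in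
  let mxy := midpt x y in let myz := midpt y z in let mzx := midpt z x in
  [:: (x, mxy, c); (mxy, y, c); (y, myz, c); (myz, z, c);
      (z, mzx, c); (mzx, x, c)].

Definition T_faces (n : nat) : seq (pt * pt * pt) :=
  iter n (fun F => flatten (map bsubdiv F)) [:: (ptT0, ptT1, ptT2)].

(* remove repeated edges (in either orientation): T_n is a simple graph *)
Fixpoint dedup_edges (V : eqType) (es : seq (V * V)) : seq (V * V) :=
  if es is e :: es' then
    if (e \in es') || ((e.2, e.1) \in es') then dedup_edges es'
    else e :: dedup_edges es'
  else [::].

Definition T_edges (n : nat) : seq (pt * pt) :=
  dedup_edges (flatten (map (@tri_sides pt) (T_faces n))).

(* Vertices: [inl i] is the original vertex v_i; [inr (w, k)] is the k-th new
   vertex (k = 0,1,2: midpoints m_xy, m_yz, m_zx; k = 3: barycenter) created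
   when subdividing the triangle with address w.  New vertices are thus
   private to the triangle being subdivided.  Each triangle carries its own
   three edges, so edges of distinct triangles are distinct (multigraph). *)
Definition svert := (nat + (seq nat * nat))%type.
Definition stri := (seq nat * (svert * svert * svert))%type.

Definition ssubdiv (t : stri) : seq stri :=
  let: (w, (x, y, z)) := t in
  let mxy : svert := inr (w, 0%N) in let myz : svert := inr (w, 1%N) in
  let mzx : svert := inr (w, 2%N) in let c : svert := inr (w, 3%N) in
  [:: (rcons w 0%N, (x, mxy, c)); (rcons w 1%N, (mxy, y, c));
      (rcons w 2%N, (y, myz, c)); (rcons w 3%N, (myz, z, c));
      (rcons w 4%N, (z, mzx, c)); (rcons w 5%N, (mzx, x, c))].

Definition S_tris (n : nat) : seq stri :=
  iter n (fun F => flatten (map ssubdiv F))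
    [:: ([::], (inl 0%N, inl 1%N, inl 2%N))].

Definition S_edges (n : nat) : seq (svert * svert) :=
  flatten (map (fun t : stri => tri_sides t.2) (S_tris n)).

Definition p_T (R : realType) : R := crit_param R T_edges ptT0 ptT1.
Definition p_S (R : realType) : R :=
  crit_param R S_edges (inl 0%N : svert) (inl 1%N).

(* Main.v *)
Require Import Defs.
From mathcomp Require Import all_boot all_order all_algebra.
From mathcomp Require Import all_classical all_reals all_analysis.
From mathcomp Require Import ring lra.
From Stdlib Require Import Relations.
Set Implicit Arguments. Unset Strict Implicit. Unset Printing Implicit Defensive.
Import Order.TTheory GRing.Theory Num.Theory.
Local Open Scope ring_scope.
Section ExSec.
Variable R : realFieldType.

Fixpoint Ex (ps : seq R) (G : seq bool -> R) : R :=
  match ps with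
  | [::] => G [::]
  | p :: ps' => p * Ex ps' (fun bs => G (true :: bs)) +
                (1 - p) * Ex ps' (fun bs => G (false :: bs))
  end.

Lemma Ex_ext ps G H : (forall bs, G bs = H bs) -> Ex ps G = Ex ps H.
Proof.
elim: ps G H => [|p ps IH] G H GH; first exact: GH.
by rewrite /=; congr (_ * _ + _ * _); apply: IH => bs; exact: GH.
Qed.

Lemma Ex_const ps c : Ex ps (fun _ => c) = c.
Proof. elim: ps => [|p ps IH] //=; rewrite !IH; ring. Qed.

Definition prob_ok (ps : seq R) := forall q, q \in ps -> 0 <= q <= 1.

Lemma prob_ok_cons p ps : prob_ok (p :: ps) -> 0 <= p <= 1 /\ prob_ok ps.
Proof.
move=> h; split; first by apply: h; rewrite inE eqxx.
by move=> q qin; apply: h; rewrite inE qin orbT.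
Qed.

Lemma Ex_le ps G H : prob_ok ps -> (forall bs, G bs <= H bs) -> Ex ps G <= Ex ps H.
Proof.
elim: ps G H => [|p ps IH] G H pok GH; first exact: GH.
rewrite /=.
case: (prob_ok_cons pok) => /andP[p0 p1] pok'.
have h1 := IH (fun bs => G (true :: bs)) (fun bs => H (true :: bs)) pok' (fun bs => GH _).
have h2 := IH (fun bs => G (false :: bs)) (fun bs => H (false :: bs)) pok' (fun bs => GH _).
have p1' : 0 <= 1 - p by lra.
by apply: lerD; apply: ler_wpM2l.
Qed.

Lemma Ex_nseq0 n G : Ex (nseq n 0) G = G (nseq n false).
Proof.
elim: n G => [|n IH] G //=; by rewrite !IH mul0r add0r subr0 mul1r.
Qed.

Lemma Ex_split ps G j : (j < size ps)%N ->
  Ex ps G = nth 0 ps j * Ex ps (fun bs => G (set_nth false bs j true)) +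
            (1 - nth 0 ps j) * Ex ps (fun bs => G (set_nth false bs j false)).
Proof.
elim: ps G j => [|p ps IH] G [|j] //= hj.
  set X := Ex ps _; set Y := Ex ps _; ring.
rewrite (IH (fun bs => G (true :: bs)) j hj) (IH (fun bs => G (false :: bs)) j hj).
ring.
Qed.

Lemma Ex_set_indep ps G j x b : (j < size ps)%N ->
  Ex (set_nth 0 ps j x) (fun bs => G (set_nth false bs j b)) =
  Ex ps (fun bs => G (set_nth false bs j b)).
Proof.
elim: ps G j => [|p ps IH] G [|j] //= hj.
  set X := Ex ps _; ring.
by rewrite (IH (fun bs => G (true :: bs)) j hj) (IH (fun bs => G (false :: bs)) j hj).
Qed.

Definition incr (G : seq bool -> R) :=
  forall bs j, G (set_nth false bs j false) <= G (set_nth false bs j true).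

Lemma Ex_mix Q G j p : prob_ok Q -> incr G -> (j < size Q)%N ->
  0 <= p -> nth 0 Q j + p <= 1 ->
  p * Ex Q (fun bs => G (set_nth false bs j true)) + (1 - p) * Ex Q G <=
  Ex (set_nth 0 Q j (nth 0 Q j + p)) G.
Proof.
move=> Qok Gi hj p0 hp.
have hj' : (j < size (set_nth 0%R Q j (nth 0%R Q j + p)%R))%N.
  by rewrite size_set_nth; apply: leq_trans (leq_maxr _ _).
rewrite (Ex_split G hj) (Ex_split G hj').
rewrite !Ex_set_indep // nth_set_nth /= eqxx.
set A := Ex Q _; set B := Ex Q _; set q := nth 0 Q j.
have AB : B <= A by apply: Ex_le => // bs; apply: Gi.
have q0 : 0 <= q by have /andP[] := Qok q (mem_nth 0 hj).
rewrite -subr_ge0.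
have -> : (q + p) * A + (1 - (q + p)) * B - (p * A + (1 - p) * (q * A + (1 - q) * B))
  = p * q * (A - B) by ring.
by apply: mulr_ge0; [apply: mulr_ge0 | rewrite subr_ge0].
Qed.


Lemma Ex_ext_size ps G H : (forall bs, size bs = size ps -> G bs = H bs) ->
  Ex ps G = Ex ps H.
Proof.
elim: ps G H => [|p ps IH] G H GH; first exact: GH.
rewrite /=; congr (_ * _ + _ * _); apply: IH => bs hs; apply: GH; by rewrite /= hs.
Qed.

Definition hit (phs : seq nat) (bs : seq bool) (j : nat) : bool :=
  has (fun kb => (kb.1 == j) && kb.2) (zip phs bs).
Definition orc phs bs (v : seq bool) : seq bool :=
  [seq (nth false v j || hit phs bs j) | j <- iota 0 (size v)].
Definition cnt (phs : seq nat) j := count_mem j phs.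
Definition Qof (p : R) phs (qs : seq R) : seq R :=
  [seq nth 0 qs j + (cnt phs j)%:R * p | j <- iota 0 (size qs)].

Lemma size_orc phs bs v : size (orc phs bs v) = size v.
Proof. by rewrite size_map size_iota. Qed.

Lemma nth_orc phs bs v j : (j < size v)%N ->
  nth false (orc phs bs v) j = nth false v j || hit phs bs j.
Proof. by move=> hj; rewrite (nth_map 0%N) ?size_iota // nth_iota. Qed.

Lemma orc_nil v : orc [::] [::] v = v.
Proof.
apply: (@eq_from_nth _ false); rewrite ?size_orc // => j hj.
by rewrite nth_orc // orbF.
Qed.

Lemma orc_true j0 phs bs v : (j0 < size v)%N ->
  orc (j0 :: phs) (true :: bs) v = set_nth false (orc phs bs v) j0 true.
Proof.
move=> h0; apply: (@eq_from_nth _ false).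
  by rewrite size_set_nth !size_orc; apply/esym/maxn_idPr.
move=> j; rewrite size_orc => hj.
rewrite nth_set_nth /= !nth_orc //= /hit /= andbT.
case: eqP => [->|ne]; first by rewrite eqxx orbT.
by case: eqP => // e; case: ne.
Qed.

Lemma orc_false j0 phs bs v :
  orc (j0 :: phs) (false :: bs) v = orc phs bs v.
Proof. by rewrite /orc; apply: eq_map => j; rewrite /hit /= andbF. Qed.

Lemma incr_set G j0 : incr G -> incr (fun bs => G (set_nth false bs j0 true)).
Proof.
move=> Gi bs j; rewrite /= (set_set_nth false bs j false j0 true) (set_set_nth false bs j true j0 true); case: eqP => _; first exact: lexx.
exact: (Gi (set_nth false bs j0 true) j).
Qed.

Lemma nth_Qof p phs qs j : (j < size qs)%N ->
  nth 0 (Qof p phs qs) j = nth 0 qs j + (cnt phs j)%:R * p.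
Proof. by move=> hj; rewrite (nth_map 0%N) ?size_iota // nth_iota. Qed.

Lemma size_Qof p phs qs : size (Qof p phs qs) = size qs.
Proof. by rewrite size_map size_iota. Qed.

Lemma couple p phs qs G : 0 <= p -> all (fun j => j < size qs)%N phs ->
  (forall j, (j < size qs)%N -> 0 <= nth 0 qs j /\ nth 0 qs j + (cnt phs j)%:R * p <= 1) ->
  incr G ->
  Ex (nseq (size phs) p) (fun bs => Ex qs (fun v => G (orc phs bs v))) <=
  Ex (Qof p phs qs) G.
Proof.
move=> p0; elim: phs G => [|j0 phs IH] G hall hq Gi.
  rewrite /=.
  have -> : Qof p [::] qs = qs.
    apply: (@eq_from_nth _ 0); rewrite ?size_Qof // => j hj.
    by rewrite nth_Qof // /cnt /= mul0r addr0.
  by rewrite (@Ex_ext _ _ G) // => v; rewrite orc_nil.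
move: hall => /= /andP[hj0 hall].
have hq' : forall j, (j < size qs)%N ->
    0 <= nth 0 qs j /\ nth 0 qs j + (cnt phs j)%:R * p <= 1.
  move=> j hj; have [h1 h2] := hq j hj; split => //.
  apply: le_trans h2; rewrite lerD2l ler_wpM2r // ler_nat /cnt /=.
  exact: leq_addl.
set Q' := Qof p phs qs.
have e1 : Ex (nseq (size phs) p)
   (fun bs => Ex qs (fun v => G (orc (j0 :: phs) (true :: bs) v))) =
   Ex (nseq (size phs) p) (fun bs => Ex qs (fun v =>
     (fun w => G (set_nth false w j0 true)) (orc phs bs v))).
  apply: Ex_ext => bs; apply: Ex_ext_size => v hv.
  by rewrite orc_true // hv.
have e2 : Ex (nseq (size phs) p)
   (fun bs => Ex qs (fun v => G (orc (j0 :: phs) (false :: bs) v))) =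
   Ex (nseq (size phs) p) (fun bs => Ex qs (fun v => G (orc phs bs v))).
  by apply: Ex_ext => bs; apply: Ex_ext => v; rewrite orc_false.
rewrite /= e1 e2.
have Q'ok : prob_ok Q'.
  move=> q /mapP[j]; rewrite mem_iota add0n => /andP[_ hj] ->.
  have [h1 h2] := hq' j hj; apply/andP; split => //.
  by apply: addr_ge0 => //; apply: mulr_ge0.
have hj0' : (j0 < size Q')%N by rewrite size_Qof.
have hp1 : nth 0 Q' j0 + p <= 1.
  have [_ h2] := hq j0 hj0; apply: le_trans h2.
  rewrite nth_Qof // -addrA lerD2l /cnt /= eqxx /= -addn1 natrD mulrDl mul1r addrC.
  exact: lexx.
have -> : Qof p (j0 :: phs) qs = set_nth 0 Q' j0 (nth 0 Q' j0 + p).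
  apply: (@eq_from_nth _ 0); first by rewrite size_set_nth !size_Qof; apply/esym/maxn_idPr.
  move=> j; rewrite size_Qof => hj.
  rewrite nth_set_nth /= !nth_Qof //; case: eqP => [->|ne].
    by rewrite /cnt /= eqxx /= -addn1 natrD mulrDl mul1r addrA addrAC.
  by rewrite /cnt /=; case: eqP => [e|_]; [case: ne|rewrite add0n].
apply: le_trans (Ex_mix Q'ok Gi hj0' p0 hp1).
have p1 : 0 <= 1 - p.
  have [h1 h2] := hq j0 hj0.
  move: h2; rewrite /cnt /= eqxx /= -addn1 natrD mulrDl mul1r => h2.
  have c0 : 0 <= (count_mem j0 phs)%:R :> R by [].
  have : 0 <= (count_mem j0 phs)%:R * p :> R by apply: mulr_ge0.
  lra.
apply: lerD; apply: ler_wpM2l => //.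
  exact: (IH _ hall hq' (incr_set j0 Gi)).
exact: (IH _ hall hq' Gi).
Qed.


Definition ffcons n (b : bool) (w : {ffun 'I_n -> bool}) : {ffun 'I_n.+1 -> bool} :=
  [ffun i => if unlift ord0 i is Some j then w j else b].
Definition ffsplit n (w : {ffun 'I_n.+1 -> bool}) : bool * {ffun 'I_n -> bool} :=
  (w ord0, [ffun j => w (lift ord0 j)]).

Lemma ffcons_bij n : bijective (fun bw : bool * {ffun 'I_n -> bool} => ffcons bw.1 bw.2).
Proof.
exists (@ffsplit n).
  case=> b w; rewrite /ffsplit /ffcons /= ffunE unlift_none; congr (_, _).
  by apply/ffunP => j; rewrite !ffunE liftK.
move=> w; apply/ffunP => i; rewrite /ffsplit /ffcons /= ffunE.
by case: unliftP => [j ->|->]; rewrite ?ffunE.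
Qed.

Lemma bridge (p : R) n (F : {ffun 'I_n -> bool} -> R) :
  \sum_(w : {ffun 'I_n -> bool}) (\prod_(i : 'I_n) (if w i then p else 1 - p)) * F w =
  Ex (nseq n p) (fun bs => F [ffun i : 'I_n => nth false bs i]).
Proof.
elim: n F => [|n IH] F.
  set w0 := [ffun i : 'I_0 => nth false [::] i].
  rewrite /= (@big_pred1 _ _ _ _ w0) ?big_ord0 ?mul1r //.
  by move=> w; apply/esym/eqP/ffunP => -[].
rewrite (reindex _ (onW_bij _ (@ffcons_bij n))) /=.
rewrite -(pair_big xpredT xpredT (fun b w => (\prod_(i < n.+1) (if ffcons b w i then p else 1 - p)) * F (ffcons b w))) /=.
rewrite big_bool /=.
have e : forall b, \sum_(w : {ffun 'I_n -> bool}) (\prod_(i < n.+1) (if ffcons b w i then p else 1 - p)) * F (ffcons b w) =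
    (if b then p else 1 - p) * Ex (nseq n p) (fun bs => F [ffun i : 'I_n.+1 => nth false (b :: bs) i]).
  move=> b.
  have -> : Ex (nseq n p) (fun bs => F [ffun i : 'I_n.+1 => nth false (b :: bs) i]) =
      Ex (nseq n p) (fun bs => F (ffcons b [ffun i : 'I_n => nth false bs i])).
    apply: Ex_ext => bs; congr F; apply/ffunP => i; rewrite !ffunE.
    by case: unliftP => [j ->|->]; rewrite ?ffunE //= lift0.
  rewrite -(IH (fun w => F (ffcons b w))) big_distrr /=.
  apply: eq_bigr => w _; rewrite big_ord_recl /ffcons !ffunE unlift_none mulrA.
  congr (_ * _ * _); apply: eq_bigr => i _; by rewrite ffunE liftK.
by rewrite !e.
Qed.

End ExSec.



Definition comb (a b c : rat) (x y z : pt) : pt :=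
  (a * x.1.1 + b * y.1.1 + c * z.1.1, a * x.1.2 + b * y.1.2 + c * z.1.2,
   a * x.2 + b * y.2 + c * z.2).
Definition det3 (x y z : pt) : rat :=
  x.1.1 * (y.1.2 * z.2 - y.2 * z.1.2) - x.1.2 * (y.1.1 * z.2 - y.2 * z.1.1)
  + x.2 * (y.1.1 * z.1.2 - y.1.2 * z.1.1).
Definition ins (P x y z : pt) : Prop :=
  exists a b c, [/\ 0 < a, 0 < b, 0 < c & P = comb a b c x y z].
Definition inside (P : pt) (t : pt * pt * pt) : Prop :=
  let: (x, y, z) := t in ins P x y z.
Definition ndeg (t : pt * pt * pt) : bool :=
  let: (x, y, z) := t in det3 x y z != 0.
Definition disj (t1 t2 : pt * pt * pt) : Prop :=
  forall P, inside P t1 -> inside P t2 -> False.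

Lemma pt_eq (a b : pt) : a.1.1 = b.1.1 -> a.1.2 = b.1.2 -> a.2 = b.2 -> a = b.
Proof. by case: a => [[? ?] ?]; case: b => [[? ?] ?] /= -> -> ->. Qed.

Lemma coords_uniq x y z a b c a' b' c' : det3 x y z != 0 ->
  comb a b c x y z = comb a' b' c' x y z -> [/\ a = a', b = b' & c = c'].
Proof.
move=> hD [e1 e2 e3].
have h1 : (a - a') * x.1.1 + (b - b') * y.1.1 + (c - c') * z.1.1 = 0.
  apply/eqP; rewrite -subr_eq0 subr0; apply/eqP.
  have -> : (a - a') * x.1.1 + (b - b') * y.1.1 + (c - c') * z.1.1 =
    (a * x.1.1 + b * y.1.1 + c * z.1.1) - (a' * x.1.1 + b' * y.1.1 + c' * z.1.1) by ring.
  by rewrite e1 subrr.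
have h2 : (a - a') * x.1.2 + (b - b') * y.1.2 + (c - c') * z.1.2 = 0.
  have -> : (a - a') * x.1.2 + (b - b') * y.1.2 + (c - c') * z.1.2 =
    (a * x.1.2 + b * y.1.2 + c * z.1.2) - (a' * x.1.2 + b' * y.1.2 + c' * z.1.2) by ring.
  by rewrite e2 subrr.
have h3 : (a - a') * x.2 + (b - b') * y.2 + (c - c') * z.2 = 0.
  have -> : (a - a') * x.2 + (b - b') * y.2 + (c - c') * z.2 =
    (a * x.2 + b * y.2 + c * z.2) - (a' * x.2 + b' * y.2 + c' * z.2) by ring.
  by rewrite e3 subrr.
have h0 : comb (a - a') (b - b') (c - c') x y z = (0, 0, 0) by apply: pt_eq.
have ha : (a - a') * det3 x y z = det3 (comb (a - a') (b - b') (c - c') x y z) y z.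
  by rewrite /det3 /comb /=; ring.
have hb : (b - b') * det3 x y z = det3 x (comb (a - a') (b - b') (c - c') x y z) z.
  by rewrite /det3 /comb /=; ring.
have hc : (c - c') * det3 x y z = det3 x y (comb (a - a') (b - b') (c - c') x y z).
  by rewrite /det3 /comb /=; ring.
rewrite h0 /det3 /= in ha hb hc.
have z0 : forall d, d * det3 x y z = 0 -> d = 0.
  by move=> d /eqP; rewrite mulf_eq0 (negbTE hD) orbF => /eqP.
split; apply/eqP; rewrite -subr_eq0; apply/eqP; apply: z0.
- by rewrite ha; ring.
- by rewrite hb; ring.
- by rewrite hc; ring.
Qed.

Definition region (k : nat) (A B C : rat) : Prop :=
  match k with
  | 0 => B < A /\ C < B
  | 1 => A < B /\ C < A
  | 2 => C < B /\ A < C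
  | 3 => B < C /\ A < B
  | 4 => A < C /\ B < A
  | _ => C < A /\ B < C
  end.

Lemma child_region x y z k P : (k < 6)%N ->
  inside P (nth (x, y, z) (bsubdiv (x, y, z)) k) ->
  exists A B C, [/\ 0 < A, 0 < B, 0 < C, P = comb A B C x y z & region k A B C].
Proof.
case: k => [|[|[|[|[|[|k]]]]]] // _ /= [a [b [c [ha hb hc ->]]]].
- exists (a + b / 2%:R + c / 3%:R), (b / 2%:R + c / 3%:R), (c / 3%:R); split;
    [lra|lra|lra| apply: pt_eq; rewrite /comb /midpt /bary /=; ring | rewrite /=; lra].
- exists (a / 2%:R + c / 3%:R), (a / 2%:R + b + c / 3%:R), (c / 3%:R); split;
    [lra|lra|lra| apply: pt_eq; rewrite /comb /midpt /bary /=; ring | rewrite /=; lra].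
- exists (c / 3%:R), (a + b / 2%:R + c / 3%:R), (b / 2%:R + c / 3%:R); split;
    [lra|lra|lra| apply: pt_eq; rewrite /comb /midpt /bary /=; ring | rewrite /=; lra].
- exists (c / 3%:R), (a / 2%:R + c / 3%:R), (a / 2%:R + b + c / 3%:R); split;
    [lra|lra|lra| apply: pt_eq; rewrite /comb /midpt /bary /=; ring | rewrite /=; lra].
- exists (b / 2%:R + c / 3%:R), (c / 3%:R), (a + b / 2%:R + c / 3%:R); split;
    [lra|lra|lra| apply: pt_eq; rewrite /comb /midpt /bary /=; ring | rewrite /=; lra].
- exists (a / 2%:R + b + c / 3%:R), (c / 3%:R), (a / 2%:R + c / 3%:R); split;
    [lra|lra|lra| apply: pt_eq; rewrite /comb /midpt /bary /=; ring | rewrite /=; lra].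
Qed.

Lemma region_excl k1 k2 A B C : (k1 < 6)%N -> (k2 < 6)%N ->
  region k1 A B C -> region k2 A B C -> k1 = k2.
Proof.
case: k1 => [|[|[|[|[|[|k1]]]]]] //; case: k2 => [|[|[|[|[|[|k2]]]]]] //= _ _;
  move=> [h1 h2] [h3 h4]; first [reflexivity | exfalso; lra].
Qed.

Lemma child_disj x y z k1 k2 : det3 x y z != 0 -> (k1 < 6)%N -> (k2 < 6)%N -> k1 <> k2 ->
  disj (nth (x, y, z) (bsubdiv (x, y, z)) k1) (nth (x, y, z) (bsubdiv (x, y, z)) k2).
Proof.
move=> hD h1 h2 ne P /(child_region h1) [A [B [C [_ _ _ eP r1]]]].
move=> /(child_region h2) [A' [B' [C' [_ _ _ eP' r2]]]].
have [eA eB eC] := coords_uniq hD (etrans (esym eP) eP').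
subst A' B' C'; exact: ne (region_excl h1 h2 r1 r2).
Qed.

Lemma child_in x y z k P : (k < 6)%N ->
  inside P (nth (x, y, z) (bsubdiv (x, y, z)) k) -> inside P (x, y, z).
Proof.
move=> hk /(child_region hk) [A [B [C [hA hB hC eP _]]]].
by exists A, B, C.
Qed.

Lemma child_det x y z k : (k < 6)%N ->
  let: (x', y', z') := nth (x, y, z) (bsubdiv (x, y, z)) k in
  6%:R * det3 x' y' z' = det3 x y z.
Proof.
by case: k => [|[|[|[|[|[|k]]]]]] //= _; rewrite /det3 /midpt /bary /=; field.
Qed.

Section PW.
Variable T : eqType.
Variable r : T -> T -> Prop.
Fixpoint allr (x : T) (s : seq T) : Prop :=
  if s is y :: s' then r x y /\ allr x s' else True.
Fixpoint pw (s : seq T) : Prop :=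
  if s is x :: s' then allr x s' /\ pw s' else True.

Lemma allr_mem x s : allr x s -> forall y, y \in s -> r x y.
Proof.
elim: s => [|z s IH] //= [h1 h2] y; rewrite inE => /orP[/eqP->//|]; exact: IH.
Qed.

Lemma allr_intro x s : (forall y, y \in s -> r x y) -> allr x s.
Proof.
elim: s => [|z s IH] //= h; split; first by apply: h; rewrite inE eqxx.
by apply: IH => y yin; apply: h; rewrite inE yin orbT.
Qed.

Lemma allr_nth x0 x s : (forall j, (j < size s)%N -> r x (nth x0 s j)) -> allr x s.
Proof.
elim: s => [|z s IH] //= h; split; first exact: (h 0%N).
by apply: IH => j hj; apply: (h j.+1).
Qed.

Lemma pw_nth x0 s : (forall i j, (i < j)%N -> (j < size s)%N -> r (nth x0 s i) (nth x0 s j)) -> pw s.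
Proof.
elim: s => [|z s IH] //= h; split.
  by apply: (@allr_nth x0 z s) => j hj; apply: (h 0%N j.+1).
by apply: IH => i j hij hj; apply: (h i.+1 j.+1).
Qed.

Lemma allr_cat x s1 s2 : allr x s1 -> allr x s2 -> allr x (s1 ++ s2).
Proof. by elim: s1 => [|z s1 IH] //= [h1 h2] h3; split => //; apply: IH. Qed.

Lemma pw_cat s1 s2 : pw s1 -> pw s2 -> (forall x y, x \in s1 -> y \in s2 -> r x y) ->
  pw (s1 ++ s2).
Proof.
elim: s1 => [|z s1 IH] //= [h1 h2] h3 h4; split.
  apply: allr_cat => //; apply: allr_intro => y yin; apply: h4 => //.
  by rewrite inE eqxx.
by apply: IH => // x y xin yin; apply: h4 => //; rewrite inE xin orbT.
Qed.
End PW.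

Lemma bsubdiv_mem t c : c \in bsubdiv t ->
  exists2 k, (k < 6)%N & c = nth t (bsubdiv t) k.
Proof.
move=> cin; exists (index c (bsubdiv t)).
  by rewrite -index_mem in cin; case: t cin => [[x y] z].
by rewrite nth_index.
Qed.

Lemma pw_sub t : ndeg t -> pw disj (bsubdiv t).
Proof.
case: t => [[x y] z] hD; apply: (@pw_nth _ disj (x, y, z)) => i j hij hj.
apply: child_disj => //; first exact: ltn_trans hij hj.
by move=> e; rewrite e ltnn in hij.
Qed.

Lemma ndeg_sub t c : ndeg t -> c \in bsubdiv t -> ndeg c.
Proof.
case: t => [[x y] z] hD /bsubdiv_mem [k hk ->].
have := child_det x y z hk.
case: (nth _ _ k) => [[x' y'] z'] e; rewrite /ndeg.
apply/eqP => e0; move: hD; by rewrite /ndeg -e e0 mulr0 eqxx.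
Qed.

Lemma inside_sub t c P : c \in bsubdiv t -> inside P c -> inside P t.
Proof.
case: t => [[x y] z] /bsubdiv_mem [k hk ->]; exact: child_in.
Qed.

Lemma pw_flatten F : pw disj F -> all ndeg F -> pw disj (flatten (map bsubdiv F)).
Proof.
elim: F => [|t F IH] //= [h1 h2] /andP[n1 n2].
apply: pw_cat; [exact: pw_sub | exact: IH |].
move=> c c' cin /flatten_mapP [t' t'in c'in] P Pc Pc'.
exact: (allr_mem h1 t'in) P (inside_sub cin Pc) (inside_sub c'in Pc').
Qed.

Lemma all_ndeg_flatten F : all ndeg F -> all ndeg (flatten (map bsubdiv F)).
Proof.
move=> /allP h; apply/allP => c /flatten_mapP [t tin cin].
exact: ndeg_sub (h t tin) cin.
Qed.

Lemma T_faces_inv n : pw disj (T_faces n) /\ all ndeg (T_faces n).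
Proof.
elim: n => [|n [IH1 IH2]].
  by split => //=; rewrite andbT /det3 /ptT0 /ptT1 /ptT2 /=.
rewrite /T_faces iterS -/(T_faces n); split; [exact: pw_flatten | exact: all_ndeg_flatten].
Qed.

Definition matchE (f e : pt * pt) : bool := (e == f) || (e == (f.2, f.1)).
Definition hasf (f : pt * pt) (t : pt * pt * pt) : bool :=
  (0 < count (matchE f) (tri_sides t))%N.

Lemma det3_eq12 x z : det3 x x z = 0. Proof. rewrite /det3; ring. Qed.
Lemma det3_eq23 x y : det3 x y y = 0. Proof. rewrite /det3; ring. Qed.
Lemma det3_eq13 x y : det3 x y x = 0. Proof. rewrite /det3; ring. Qed.
Lemma det3_swap x y z : det3 y x z = - det3 x y z. Proof. rewrite /det3; ring. Qed.
Lemma det3_swap23 x y z : det3 x z y = - det3 x y z. Proof. rewrite /det3; ring. Qed.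
Lemma det3_rot x y z : det3 y z x = det3 x y z. Proof. rewrite /det3; ring. Qed.

Lemma matchE2 f a b c d : matchE f (a, b) -> matchE f (c, d) ->
  (a = c /\ b = d) \/ (a = d /\ b = c).
Proof.
case: f => u v; rewrite /matchE /=.
by move=> /orP[|] /eqP [-> ->] /orP[|] /eqP [-> ->]; [left|right|right|left].
Qed.

Lemma count_side_le1 f t : ndeg t -> (count (matchE f) (tri_sides t) <= 1)%N.
Proof.
case: t => [[x y] z] /= hD.
have nxy : x <> y by move=> e; move: hD; rewrite e det3_eq12 eqxx.
have nyz : y <> z by move=> e; move: hD; rewrite e det3_eq23 eqxx.
have nxz : x <> z by move=> e; move: hD; rewrite e det3_eq13 eqxx.
case h1: (matchE f (x, y)); case h2: (matchE f (y, z)); case h3: (matchE f (z, x)) => //=.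
- by case: (matchE2 h1 h2) => -[].
- by case: (matchE2 h1 h2) => -[].
- by case: (matchE2 h1 h3) => -[].
- by case: (matchE2 h2 h3) => [[e1 e2]|[e1 e2]]; [case: (nyz e1) | case: (nxy (esym e1))].
Qed.

Lemma ins_swap P x y z : ins P x y z -> ins P y x z.
Proof.
move=> [a [b [c [ha hb hc ->]]]]; exists b, a, c; split => //.
by apply: pt_eq; rewrite /comb /=; ring.
Qed.

Lemma ins_rot P x y z : ins P x y z -> ins P y z x.
Proof.
move=> [a [b [c [ha hb hc ->]]]]; exists b, c, a; split => //.
by apply: pt_eq; rewrite /comb /=; ring.
Qed.

Lemma hasf_form f t : ndeg t -> hasf f t ->
  exists w, det3 f.1 f.2 w != 0 /\ forall P, ins P f.1 f.2 w -> inside P t.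
Proof.
case: f => u v; case: t => [[x y] z] /= hD; rewrite /hasf /= /matchE /=.
case: eqP => [[e1 e2]|_]; first subst.
  by move=> _; exists z; split => // P.
case: eqP => [[e1 e2]|_]; first subst.
  move=> _; exists z; split; first by rewrite det3_swap oppr_eq0.
  by move=> P /ins_swap.
case: eqP => [[e1 e2]|_]; first subst.
  move=> _; exists x; split; first by rewrite -det3_rot -det3_rot.
  by move=> P /ins_rot /ins_rot.
case: eqP => [[e1 e2]|_]; first subst.
  move=> _; exists x; split; first by rewrite det3_swap oppr_eq0 -det3_rot -det3_rot.
  by move=> P /ins_swap /ins_rot /ins_rot.
case: eqP => [[e1 e2]|_]; first subst.
  move=> _; exists y; split; first by rewrite -det3_rot.
  by move=> P /ins_rot.
case: eqP => [[e1 e2]|_] //; subst.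
move=> _; exists y; split; first by rewrite det3_swap23 oppr_eq0.
by move=> P /ins_swap /ins_rot.
Qed.

Lemma two_face_gen u v w1 w2 a b c : w2 = comb a b c u v w1 -> 0 < c ->
  exists P, ins P u v w1 /\ ins P u v w2.
Proof.
move=> e hc.
have ha : - a <= `|a| by rewrite -normrN; apply: ler_norm.
have hb : - b <= `|b| by rewrite -normrN; apply: ler_norm.
have na : 0 <= `|a| by [].
have nb : 0 <= `|b| by [].
set K := 1 + `|a| + `|b|.
have K0 : 0 < K by rewrite /K; lra.
exists (comb K K 1 u v w2); split; last by exists K, K, 1; split.
exists (K + a), (K + b), c; split => //; [rewrite /K; lra | rewrite /K; lra |].
by rewrite e; apply: pt_eq; rewrite /comb /=; ring.
Qed.

Lemma two_face u v w1 w2 : 0 < det3 u v w1 * det3 u v w2 ->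
  exists P, ins P u v w1 /\ ins P u v w2.
Proof.
move=> hpos.
have D1n : det3 u v w1 != 0.
  by apply/eqP => e; move: hpos; rewrite e mul0r ltxx.
apply: (@two_face_gen _ _ _ _ (det3 w2 v w1 / det3 u v w1)
   (det3 u w2 w1 / det3 u v w1) (det3 u v w2 / det3 u v w1)).
  by apply: pt_eq; rewrite /comb /det3 /=; field; rewrite -/(det3 u v w1).
set D1 := det3 u v w1 in D1n hpos *; set D2 := det3 u v w2 in hpos *.
have e : D2 / D1 * D1 = D2 by rewrite mulfVK.
have sq : 0 < D1 * D1 by rewrite lt0r mulf_neq0 //= -expr2 sqr_ge0.
set c := D2 / D1 in e *.
nra.
Qed.

Lemma sign3 (s1 s2 s3 : rat) : s1 != 0 -> s2 != 0 -> s3 != 0 ->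
  0 < s1 * s2 \/ 0 < s1 * s3 \/ 0 < s2 * s3.
Proof.
move=> h1 h2 h3.
have n12 : s1 * s2 != 0 by rewrite mulf_neq0.
have n13 : s1 * s3 != 0 by rewrite mulf_neq0.
case: (ltP 0 (s1 * s2)) => [|l12]; first by left.
case: (ltP 0 (s1 * s3)) => [|l13]; first by right; left.
right; right.
have l12' : s1 * s2 < 0 by rewrite lt_neqAle n12.
have l13' : s1 * s3 < 0 by rewrite lt_neqAle n13.
have sq : 0 < s1 * s1 by rewrite lt0r mulf_neq0 //= -expr2 sqr_ge0.
nra.
Qed.

Lemma three f t1 t2 t3 : ndeg t1 -> ndeg t2 -> ndeg t3 ->
  hasf f t1 -> hasf f t2 -> hasf f t3 ->
  disj t1 t2 -> disj t1 t3 -> disj t2 t3 -> False.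
Proof.
move=> n1 n2 n3 /(hasf_form n1) [w1 [d1 i1]] /(hasf_form n2) [w2 [d2 i2]].
move=> /(hasf_form n3) [w3 [d3 i3]] D12 D13 D23.
case: (sign3 d1 d2 d3) => [h|[h|h]].
- by have [P [h1 h2]] := two_face h; apply: (D12 P); [apply: i1 | apply: i2].
- by have [P [h1 h2]] := two_face h; apply: (D13 P); [apply: i1 | apply: i3].
- by have [P [h1 h2]] := two_face h; apply: (D23 P); [apply: i2 | apply: i3].
Qed.

Lemma aux1 f t F : pw disj F -> allr disj t F -> ndeg t -> all ndeg F -> hasf f t ->
  (count (hasf f) F <= 1)%N.
Proof.
elim: F => [|t2 F IH] //= [a2 p2] [d2 a1] nt /andP[n2 nF] ht.
case h2: (hasf f t2) => /=; last exact: IH.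
rewrite ltnS leqn0 -/(count _ _) eqn0Ngt -has_count; apply/hasPn => t3 t3in.
apply/negP => h3.
apply: (three nt n2 (allP nF t3 t3in) ht h2 h3 d2).
  exact: allr_mem a1 _ t3in.
exact: allr_mem a2 _ t3in.
Qed.

Lemma count_hasf_le2 f F : pw disj F -> all ndeg F -> (count (hasf f) F <= 2)%N.
Proof.
elim: F => [|t F IH] //= [a p] /andP[nt nF].
case h: (hasf f t) => /=; last by rewrite add0n; apply: IH.
by rewrite add1n ltnS; apply: (aux1 p a nt nF h).
Qed.

Lemma count_edges_le f F : all ndeg F ->
  (count (matchE f) (flatten (map (@tri_sides pt) F)) <= count (hasf f) F)%N.
Proof.
elim: F => [|t F IH] //= /andP[nt nF].
rewrite count_cat; apply: leq_add; last exact: IH.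
case h: (hasf f t); first exact: count_side_le1.
by move: h; rewrite /hasf lt0n => /negbFE/eqP ->.
Qed.

Lemma T_count2 n f :
  (count (matchE f) (flatten (map (@tri_sides pt) (T_faces n))) <= 2)%N.
Proof.
have [h1 h2] := T_faces_inv n.
exact: leq_trans (count_edges_le f h2) (count_hasf_le2 f h1 h2).
Qed.

Definition geo (w : seq nat) : pt * pt * pt :=
  foldl (fun t d => nth t (bsubdiv t) d) (ptT0, ptT1, ptT2) w.
Definition pos (s : svert) : pt :=
  match s with
  | inl k => nth ptT0 [:: ptT0; ptT1; ptT2] k
  | inr (w, k) => let: (x, y, z) := geo w in
      nth (bary x y z) [:: midpt x y; midpt y z; midpt z x] k
  end.
Arguments pos : simpl never.
Definition posT (t : svert * svert * svert) : pt * pt * pt :=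
  let: (x, y, z) := t in (pos x, pos y, pos z).
Definition pp (e : svert * svert) : pt * pt := (pos e.1, pos e.2).

Lemma geo_rcons w d : geo (rcons w d) = nth (geo w) (bsubdiv (geo w)) d.
Proof. by rewrite /geo foldl_rcons. Qed.

Lemma ssub_ok t : posT t.2 = geo t.1 ->
  map (fun t' => posT t'.2) (ssubdiv t) = bsubdiv (posT t.2) /\
  forall t', t' \in ssubdiv t -> posT t'.2 = geo t'.1.
Proof.
case: t => w [[x y] z] /= e.
have ex : pos (inr (w, 0%N)) = midpt (pos x) (pos y) by rewrite /pos -e.
have ey : pos (inr (w, 1%N)) = midpt (pos y) (pos z) by rewrite /pos -e.
have ez : pos (inr (w, 2%N)) = midpt (pos z) (pos x) by rewrite /pos -e.
have ec : pos (inr (w, 3%N)) = bary (pos x) (pos y) (pos z) by rewrite /pos -e.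
split; first by rewrite /= ex ey ez ec.
move=> t'; rewrite !inE =>
  /orP[/eqP->|/orP[/eqP->|/orP[/eqP->|/orP[/eqP->|/orP[/eqP->|/eqP->]]]]] /=;
  by rewrite geo_rcons -e /= ?ex ?ey ?ez ?ec.
Qed.

Lemma S_T n : map (fun t => posT t.2) (S_tris n) = T_faces n /\
  forall t, t \in S_tris n -> posT t.2 = geo t.1.
Proof.
elim: n => [|n [IH1 IH2]].
  split => //= t; rewrite inE => /eqP -> //.
rewrite /S_tris /T_faces !iterS -/(S_tris n) -/(T_faces n); split.
  rewrite map_flatten -map_comp -IH1 -map_comp; congr flatten.
  by apply/eq_in_map => t tin /=; have [-> _] := ssub_ok (IH2 t tin).
move=> t' /flatten_mapP [t tin t'in].
by have [_ ->] := ssub_ok (IH2 t tin).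
Qed.

Definition LT n := flatten (map (@tri_sides pt) (T_faces n)).

Lemma S_edges_map n : map pp (S_edges n) = LT n.
Proof.
rewrite /S_edges /LT -(proj1 (S_T n)) map_flatten -!map_comp; congr flatten.
by apply: eq_map => -[w [[x y] z]].
Qed.

Lemma Ex_le_size (R : realFieldType) (ps : seq R) G H : prob_ok ps ->
  (forall bs, size bs = size ps -> G bs <= H bs) -> Ex ps G <= Ex ps H.
Proof.
elim: ps G H => [|p ps IH] G H pok GH; first exact: GH.
rewrite /=.
case: (prob_ok_cons pok) => /andP[p0 p1] pok'.
have h1 := IH (fun bs => G (true :: bs)) (fun bs => H (true :: bs)) pok'
  (fun bs hs => GH _ (congr1 S hs : size (_ :: bs) = size (p :: ps))).
have h2 := IH (fun bs => G (false :: bs)) (fun bs => H (false :: bs)) pok'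
  (fun bs hs => GH _ (congr1 S hs : size (_ :: bs) = size (p :: ps))).
have p1' : 0 <= 1 - p by lra.
by apply: lerD; apply: ler_wpM2l.
Qed.

Lemma dedup_mem (V : eqType) (es : seq (V * V)) e : e \in es ->
  e \in dedup_edges es \/ (e.2, e.1) \in dedup_edges es.
Proof.
elim: es e => [|e0 es IH] e //; rewrite inE => /orP[/eqP ->|ein] /=.
  case: ifP => [/orP[h|h]|_]; first exact: IH h.
    by case: (IH _ h) => /= h'; [right|left]; rewrite // -surjective_pairing in h'.
  by left; rewrite inE eqxx.
case: ifP => _; first exact: IH.
by case: (IH _ ein) => h; [left|right]; rewrite inE h orbT.
Qed.

Definition phiT n (e : pt * pt) : nat :=
  if e \in T_edges n then index e (T_edges n) else index (e.2, e.1) (T_edges n).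

Lemma phiT_lt n e : e \in LT n -> (phiT n e < size (T_edges n))%N.
Proof.
move=> /(dedup_mem) h; rewrite /phiT; case: ifP => [hin|hn].
  by rewrite index_mem.
by case: h => h; [rewrite /T_edges h in hn | rewrite index_mem].
Qed.

Lemma phiT_match n e j : (j < size (T_edges n))%N -> phiT n e = j ->
  matchE (nth (ptT0, ptT0) (T_edges n) j) e.
Proof.
rewrite /phiT /matchE => hj; case: ifP => [hin <-|hn].
  by rewrite nth_index // eqxx.
case: (boolP ((e.2, e.1) \in T_edges n)) => [hin <-|hn2].
  by rewrite nth_index //= -surjective_pairing eqxx orbT.
by rewrite memNindex // => e1; rewrite e1 ltnn in hj.
Qed.

Definition phis n := map (phiT n) (LT n).

Lemma cnt_le2 n j : (j < size (T_edges n))%N -> (cnt (phis n) j <= 2)%N.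
Proof.
move=> hj; rewrite /cnt /phis count_map.
apply: leq_trans (T_count2 n (nth (ptT0, ptT0) (T_edges n) j)).
by apply: sub_count => e /= /eqP h; apply: phiT_match.
Qed.

Lemma hit_nth phs bs i : (i < size phs)%N -> nth false bs i ->
  hit phs bs (nth 0%N phs i).
Proof.
elim: phs bs i => [|j phs IH] [|b bs] [|i] //= hi hb; rewrite /hit /=.
  by rewrite eqxx hb.
by apply/orP; right; apply: IH.
Qed.

Lemma transfer (es : seq (svert * svert)) (TE : seq (pt * pt)) (phs : seq nat)
    bs (v : seq bool) (a b : svert) :
  size phs = size es -> size v = size TE ->
  (forall i, (i < size es)%N -> (nth 0%N phs i < size TE)%N /\
     matchE (nth (ptT0, ptT0) TE (nth 0%N phs i)) (pp (nth (inl 0%N, inl 0%N) es i))) ->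
  @open_conn _ es [ffun i : 'I_(size es) => nth false bs i] a b ->
  @open_conn _ TE [ffun j : 'I_(size TE) => nth false (orc phs bs v) j] (pos a) (pos b).
Proof.
move=> hs hv hm; elim => [x y [i [wi ei]] | x | x y z _ IH1 _ IH2].
- have [hj hmat] := hm i (ltn_ord i).
  apply: rt_step; exists (Ordinal hj); split.
    rewrite ffunE /= nth_orc ?hv //; apply/orP; right; apply: hit_nth.
      by rewrite hs.
    by move: wi; rewrite ffunE.
  rewrite /edge_at (tnth_nth (ptT0, ptT0)) /=.
  move: ei; rewrite /edge_at (tnth_nth (inl 0%N, inl 0%N)) /=.
  move: hmat; rewrite /matchE.
  set E := nth _ es i; set F := nth _ TE _ => hmat ei.
  case: ei => eE; rewrite eE /pp /= in hmat; case/orP: hmat => /eqP hF.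
  - by left; rewrite -hF.
  - by right; rewrite [F]surjective_pairing; case: hF => -> ->.
  - by right; rewrite -hF.
  - by left; rewrite [F]surjective_pairing; case: hF => -> ->.
- exact: rt_refl.
- exact: rt_trans IH1 IH2.
Qed.

Lemma conn_mono (V : eqType) (es : seq (V * V)) (w1 w2 : {ffun 'I_(size es) -> bool}) a b :
  (forall i, w1 i -> w2 i) -> open_conn w1 a b -> open_conn w2 a b.
Proof.
move=> h; elim => [x y [i [wi ei]] | x | x y z _ IH1 _ IH2].
- by apply: rt_step; exists i; split => //; apply: h.
- exact: rt_refl.
- exact: rt_trans IH1 IH2.
Qed.

Definition indc (R : realType) (V : eqType) (es : seq (V * V)) (a b : V) (v : seq bool) : R :=
  if `[< @open_conn _ es [ffun j : 'I_(size es) => nth false v j] a b >] then 1 else 0.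

Lemma indc_incr (R : realType) (V : eqType) (es : seq (V * V)) a b :
  incr (@indc R V es a b).
Proof.
move=> v j; rewrite /indc.
case: (asboolP (open_conn _ a b)) => h1; last first.
  by case: (asboolP (open_conn _ a b)).
rewrite asboolT //; apply: conn_mono h1 => i; rewrite !ffunE !nth_set_nth /=.
by case: eqP.
Qed.

Lemma conn_prob_Ex (R : realType) (V : eqType) (p : R) (es : seq (V * V)) a b :
  conn_prob p es a b = Ex (nseq (size es) p) (@indc R V es a b).
Proof.
rewrite /conn_prob (bridge p (fun w : {ffun 'I_(size es) -> bool} =>
   if `[< open_conn w a b >] then (1 : R) else 0)).
by [].
Qed.

Lemma prob_ok_nseq (R : realFieldType) n (p : R) : 0 <= p <= 1 -> prob_ok (nseq n p).
Proof. by move=> h q; rewrite mem_nseq => /andP[_ /eqP ->]. Qed.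

Lemma compare (R : realType) (p p' : R) n : 0 <= p -> 2 * p <= p' -> p' <= 1 ->
  conn_prob p (S_edges n) (inl 0%N : svert) (inl 1%N) <=
  conn_prob p' (T_edges n) ptT0 ptT1.
Proof.
move=> p0 pp' p'1; rewrite !conn_prob_Ex.
set es := S_edges n; set TE := T_edges n; set M := size TE.
set phs := phis n.
have hLT : LT n = map pp es by rewrite -(S_edges_map n).
have hsz : size phs = size es by rewrite /phs /phis size_map hLT size_map.
set qs : seq R := [seq p' - (cnt phs j)%:R * p | j <- iota 0 M].
have szq : size qs = M by rewrite size_map size_iota.
have nthq : forall j, (j < M)%N -> nth 0 qs j = p' - (cnt phs j)%:R * p.
  by move=> j hj; rewrite (nth_map 0%N) ?size_iota // nth_iota.
have hcnt : forall j, (j < M)%N -> (cnt phs j)%:R * p <= 2 * p.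
  by move=> j hj; apply: ler_wpM2r => //; rewrite ler_nat cnt_le2.
have hcnt0 : forall j, 0 <= (cnt phs j)%:R * p.
  by move=> j; apply: mulr_ge0.
have hq : forall j, (j < size qs)%N ->
    0 <= nth 0 qs j /\ nth 0 qs j + (cnt phs j)%:R * p <= 1.
  move=> j; rewrite szq => hj; rewrite nthq //.
  have := hcnt j hj; have := hcnt0 j; split; lra.
have qok : prob_ok qs.
  move=> q /mapP [j]; rewrite mem_iota add0n => /andP[_ hj] ->.
  have := hcnt j hj; have := hcnt0 j; move=> h1 h2; apply/andP; split; lra.
have Qe : Qof p phs qs = nseq M p'.
  apply: (@eq_from_nth _ 0); first by rewrite size_Qof size_nseq.
  move=> j; rewrite size_Qof szq => hj.
  by rewrite nth_Qof ?szq // nthq // nth_nseq hj subrK.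
have hall : all (fun j => (j < size qs)%N) phs.
  apply/allP => j /mapP [e ein ->]; rewrite szq; exact: phiT_lt.
have hc := couple p0 hall hq (indc_incr R TE ptT0 ptT1).
rewrite Qe hsz in hc.
apply: le_trans hc.
apply: Ex_le; first by apply: prob_ok_nseq; apply/andP; split; lra.
move=> bs; rewrite -[X in X <= _](Ex_const qs); apply: Ex_le_size => // v hv.
rewrite /indc; case: (asboolP (open_conn _ _ _)) => h; last first.
  by case: (asboolP (open_conn _ _ _)).
rewrite asboolT //.
have hm : forall i, (i < size es)%N -> (nth 0%N phs i < size TE)%N /\
     matchE (nth (ptT0, ptT0) TE (nth 0%N phs i)) (pp (nth (inl 0%N, inl 0%N) es i)).
  move=> i hi.
  have e1 : nth 0%N phs i = phiT n (pp (nth (inl 0%N, inl 0%N) es i)).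
    by rewrite /phs /phis (nth_map (ptT0, ptT0)) ?hLT ?size_map // (nth_map (inl 0%N, inl 0%N)).
  rewrite e1; split; first by apply: phiT_lt; rewrite hLT map_f // mem_nth.
  by apply: phiT_match => //; apply: phiT_lt; rewrite hLT map_f // mem_nth.
have := transfer hsz (etrans hv szq) hm h.
by rewrite /pos.
Qed.

Lemma conn_false (V : eqType) (es : seq (V * V)) a b :
  @open_conn _ es [ffun j : 'I_(size es) => nth false (nseq (size es) false) j] a b -> a = b.
Proof.
elim => [x y [i [wi _]] | x | x y z _ IH1 _ IH2] //.
- by move: wi; rewrite ffunE nth_nseq; case: ifP.
- by rewrite IH1 IH2.
Qed.

Lemma conn_prob0 (R : realType) (V : eqType) (es : seq (V * V)) a b : a <> b ->
  conn_prob (0 : R) es a b = 0.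
Proof.
move=> ab; rewrite conn_prob_Ex Ex_nseq0 /indc asboolF //.
by move/conn_false.
Qed.

Lemma conn_prob_ge0 (R : realType) (V : eqType) (p : R) (es : seq (V * V)) a b :
  0 <= p <= 1 -> 0 <= conn_prob p es a b.
Proof.
move=> hp; rewrite conn_prob_Ex -(Ex_const (nseq (size es) p) 0).
apply: Ex_le; first exact: prob_ok_nseq.
by move=> bs; rewrite /indc; case: ifP.
Qed.

Import numFieldNormedType.Exports.
Local Open Scope classical_set_scope.

Lemma crit_facts (R : realType) (V : eqType) (E : nat -> seq (V * V)) a b : a <> b ->
  let A := [set p : R | (0 <= p <= 1) /\
        ((fun n => conn_prob p (E n) a b) @ \oo --> (0 : R))] in
  A 0 /\ has_sup A /\ 0 <= sup A /\ sup A <= 1.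
Proof.
move=> ab A.
have A0 : A 0.
  split; first by rewrite lexx ler01.
  have -> : (fun n => conn_prob (0 : R) (E n) a b) = (fun _ => 0).
    by apply: funext => n; rewrite conn_prob0.
  exact: cvg_cst.
have ub : ubound A 1 by move=> x [/andP[_ h] _].
have hs : has_sup A by split; [exists 0 | exists 1].
split => //; split => //; split; first exact: sup_upper_bound.
by apply: ge_sup => //; exists 0.
Qed.

Lemma sup_half (R : realType) (AS AT : set R) : has_sup AS -> has_sup AT ->
  0 <= sup AS -> sup AT <= 1 ->
  (forall p p', AT p' -> 0 <= p -> 2 * p < p' -> AS p) -> sup AT / 2 <= sup AS.
Proof.
move=> hS hT g0 l1 key; rewrite leNgt; apply/negP => hlt.
have [p [h1 h2]] : exists p, sup AS < p /\ 2 * p < sup AT.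
  by exists ((sup AS + sup AT / 2) / 2); split; lra.
have e0 : 0 < sup AT - 2 * p by lra.
have [p' Tp' hp'] := sup_adherent e0 hT.
have Sp : AS p by apply: (key p p') => //; lra.
have := sup_upper_bound hS Sp => h; lra.
Qed.

Lemma key_step (R : realType) (p p' : R) :
  (0 <= p' <= 1) /\ ((fun n => conn_prob p' (T_edges n) ptT0 ptT1) @ \oo --> (0 : R)) ->
  0 <= p -> 2 * p < p' ->
  (0 <= p <= 1) /\ ((fun n => conn_prob p (S_edges n) (inl 0%N : svert) (inl 1%N)) @ \oo --> (0 : R)).
Proof.
move=> [/andP[h0 h1] hc] p0 pp'.
have hp : 0 <= p <= 1 by apply/andP; split; lra.
split => //.
apply: (@squeeze_cvgr _ _ _ _ (fun _ => 0) (fun n => conn_prob p' (T_edges n) ptT0 ptT1)) => //.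
- apply: nearW => n; apply/andP; split; first exact: conn_prob_ge0.
  by apply: compare => //; lra.
- exact: cvg_cst.
Qed.

Local Close Scope classical_set_scope.
Local Open Scope ring_scope.

Theorem corollary4p10 (R : realType) : p_T R / 2 <= p_S R.
Proof.
have abS : (inl 0%N : svert) <> inl 1%N by [].
have abT : ptT0 <> ptT1 by case=> /eqP; rewrite oner_eq0.
have [_ [hsS [gS _]]] := crit_facts R S_edges abS.
have [_ [hsT [_ lT]]] := crit_facts R T_edges abT.
rewrite /p_S /p_T /crit_param; apply: sup_half => //.
move=> p p' Tp' p0 pp'; exact: (key_step Tp' p0 pp').
Qed.
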